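(* Let $G_3$ be the group described in the context. The map $\sigma:G_3\to G_3$ determined by $a_i^\sigma=b_i$, $b_i^\sigma=a_i$ ($i=1,2,3$), $u_{ij}^\sigma=v_{ij}$, $v_{ij}^\sigma=u_{ij}$, $p_{ij}^\sigma=p_{ij}$, $z_{123}^\sigma=t_{123}$, $t_{123}^\sigma=z_{123}$ is an automorphism of $G_3$ of order $2$.
   Context: For a group, $[x,y]=x^{-1}y^{-1}xy$. $G_3$ is the nilpotent group of class $3$ generated by $a_1,a_2,a_3,b_1,b_2,b_3$ with the following defining relations, where $u_{ij}=[a_i,a_j]$, $v_{ij}=[b_i,b_j]$, $p_{ij}=[a_i,b_j]$, indices in $\{1,2,3\}$: (1) $[a_i,b_i]=1$ and $a_i^2,b_i^2$ are central; (2) for $i<j$: $u_{ij}=u_{ji}$, $v_{ij}=v_{ji}$, $u_{ij}^2=v_{ij}^2=1$; (3) $u_{ij},v_{ij}$ central; (4) $p_{ij}=p_{ji}$, $p_{ij}^2=1$ for $i<j$; (5) for $\{i,j,k\}=\{1,2,3\}$, $z_{ijk}:=[p_{ij},a_k]$ with $z_{ijk}=z_{jik}=z_{kij}$; (6) $t_{ijk}:=[p_{ij},b_k]$ with $t_{ijk}=t_{jik}=t_{kij}$; (7) $z_{ijk}^2=t_{ijk}^2=1$; (8) $z_{ijk},t_{ijk}$ central. Every element of $G_3$ has a unique normal form $a_1^{\alpha_1}a_2^{\alpha_2}a_3^{\alpha_3}b_1^{\alpha_4}b_2^{\alpha_5}b_3^{\alpha_6}u_{12}^{\alpha_7}u_{13}^{\alpha_8}u_{23}^{\alpha_9}v_{12}^{\alpha_{10}}v_{13}^{\alpha_{11}}v_{23}^{\alpha_{12}}p_{12}^{\alpha_{13}}p_{13}^{\alpha_{14}}p_{23}^{\alpha_{15}}z_{123}^{\alpha_{16}}t_{123}^{\alpha_{17}}$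 ($\alpha_1,\dots,\alpha_6\in\mathbb{Z}$, others in $\{0,1\}$), and $\sigma$ is extended to all of $G_3$ through this normal form. *)

(* Defs.v *)
From HB Require Import structures.
From mathcomp Require Import all_boot all_order all_algebra.
From mathcomp Require Import monoid.
Set Implicit Arguments. Unset Strict Implicit. Unset Printing Implicit Defensive.

Local Open Scope group_scope.

Section G3.
Variable G : groupType.

Definition zexpg (x : G) (n : int) : G :=
  match n with
  | Posz k => x ^+ k
  | Negz k => (x ^+ k.+1)^-1
  end.

Definition central (x : G) : Prop := forall y : G, x * y = y * x.

Definition idx3 (i : nat) : bool := (1 <= i <= 3)%N.

Variables (a b : nat -> G).

Definition u_ (i j : nat) : G := [~ a i, a j].
Definition v_ (i j : nat) : G := [~ b i, b j].
Definition p_ (i j : nat) : G := [~ a i, b j].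
Definition z_ (i j k : nat) : G := [~ p_ i j, a k].
Definition t_ (i j k : nat) : G := [~ p_ i j, b k].

Definition G3_relations : Prop :=
  (forall i, idx3 i ->
     [~ a i, b i] = 1 /\ central (a i ^+ 2) /\ central (b i ^+ 2)) /\
  (forall i j, idx3 i -> idx3 j -> (i < j)%N ->
     u_ i j = u_ j i /\ v_ i j = v_ j i /\ u_ i j ^+ 2 = 1 /\ v_ i j ^+ 2 = 1) /\
  (forall i j, idx3 i -> idx3 j -> central (u_ i j) /\ central (v_ i j)) /\
  (forall i j, idx3 i -> idx3 j -> (i < j)%N ->
     p_ i j = p_ j i /\ p_ i j ^+ 2 = 1) /\
  (forall i j k, idx3 i -> idx3 j -> idx3 k -> i != j -> j != k -> i != k ->
     z_ i j k = z_ j i k /\ z_ i j k = z_ k i j /\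
     t_ i j k = t_ j i k /\ t_ i j k = t_ k i j /\
     z_ i j k ^+ 2 = 1 /\ t_ i j k ^+ 2 = 1 /\
     central (z_ i j k) /\ central (t_ i j k)).

Definition nilpotent_class_le3 : Prop :=
  forall x y z w : G, [~ x, y, z, w] = 1.

Definition G3_nf (al : nat -> int) (be : nat -> bool) : G :=
  zexpg (a 1%N) (al 1%N) * zexpg (a 2) (al 2) * zexpg (a 3) (al 3) *
  zexpg (b 1%N) (al 4) * zexpg (b 2) (al 5) * zexpg (b 3) (al 6) *
  u_ 1%N 2 ^+ be 7 * u_ 1%N 3 ^+ be 8 * u_ 2 3 ^+ be 9 *
  v_ 1%N 2 ^+ be 10 * v_ 1%N 3 ^+ be 11 * v_ 2 3 ^+ be 12 *
  p_ 1%N 2 ^+ be 13 * p_ 1%N 3 ^+ be 14 * p_ 2 3 ^+ be 15 *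
  z_ 1%N 2 3 ^+ be 16 * t_ 1%N 2 3 ^+ be 17.

Definition G3_unique_nf : Prop :=
  (forall g : G, exists al be, G3_nf al be = g) /\
  (forall al be al' be', G3_nf al be = G3_nf al' be' ->
     (forall i, (1 <= i <= 6)%N -> al i = al' i) /\
     (forall i, (7 <= i <= 17)%N -> be i = be' i)).

(* image of the normal form word under sigma: a_i <-> b_i, u_ij <-> v_ij,
   p_ij fixed, z123 <-> t123 *)
Definition G3_sigma_nf (al : nat -> int) (be : nat -> bool) : G :=
  zexpg (b 1%N) (al 1%N) * zexpg (b 2) (al 2) * zexpg (b 3) (al 3) *
  zexpg (a 1%N) (al 4) * zexpg (a 2) (al 5) * zexpg (a 3) (al 6) *
  v_ 1%N 2 ^+ be 7 * v_ 1%N 3 ^+ be 8 * v_ 2 3 ^+ be 9 *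
  u_ 1%N 2 ^+ be 10 * u_ 1%N 3 ^+ be 11 * u_ 2 3 ^+ be 12 *
  p_ 1%N 2 ^+ be 13 * p_ 1%N 3 ^+ be 14 * p_ 2 3 ^+ be 15 *
  t_ 1%N 2 3 ^+ be 16 * z_ 1%N 2 3 ^+ be 17.

End G3.

(* Main.v *)
Require Import Defs.
From HB Require Import structures.
From mathcomp Require Import all_boot all_order all_algebra.
From mathcomp Require Import monoid.
From mathcomp Require Import zify.
From Stdlib Require Import ClassicalEpsilon.
Set Implicit Arguments. Unset Strict Implicit. Unset Printing Implicit Defensive.
Local Open Scope group_scope.

Ltac gnf := rewrite /commg /conjg; rewrite ?invgM ?invgK ?mulgA;
  repeat progress rewrite ?mulgK ?mulgVK ?mulgV ?mulVg ?mul1g ?mulg1 ?mulgA.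

Section Basic.
Variable H : groupType.
Implicit Types x y z c : H.

Lemma centralP c : central c -> forall x, commute c x.
Proof. by move=> hc x; apply: hc. Qed.

Lemma central1 : central (1 : H).
Proof. by move=> y; rewrite mul1g mulg1. Qed.

Lemma centralM c d : central c -> central d -> central (c * d).
Proof. by move=> hc hd y; rewrite -mulgA (hd y) mulgA (hc y) mulgA. Qed.

Lemma centralV c : central c -> central c^-1.
Proof.
move=> hc y; apply: (mulIg c); by rewrite -mulgA -(hc y) mulKg mulgVK.
Qed.

Lemma centralX c n : central c -> central (c ^+ n).
Proof. move=> hc; elim: n => [|n IH]; first exact: central1. by rewrite expgS; apply: centralM. Qed.

Lemma commg_central1 c x : central c -> [~ c, x] = 1.
Proof. by move=> hc; apply/eqP/commgP; apply: hc. Qed.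

Lemma commg_central1r c x : central c -> [~ x, c] = 1.
Proof. by move=> hc; rewrite -invgR commg_central1 // invg1. Qed.

Lemma conjg_central c x : central c -> c ^ x = c.
Proof. by move=> hc; rewrite conjgE (hc x) mulKg. Qed.

Lemma conjg_central_r c x : central c -> x ^ c = x.
Proof. by move=> hc; rewrite conjgE -(hc x) mulKg. Qed.

Lemma conjgR x y : x ^ y = x * [~ x, y].
Proof. by rewrite commgEl mulVKg. Qed.

Lemma commgMr x y z : [~ x, y * z] = [~ x, z] * [~ x, y] ^ z.
Proof. by gnf. Qed.

Lemma commgM_central x y c d : central c -> central d -> [~ x * c, y * d] = [~ x, y].
Proof.
move=> hc hd; rewrite commgMr commg_central1r // mul1g conjg_central_r //.
by rewrite -invgR commgMr commg_central1r // mul1g conjg_central_r // invgR.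
Qed.

Lemma commgVr x y : [~ x, y^-1] = ([~ x, y]^-1) ^ y^-1.
Proof. by gnf. Qed.


Lemma zexpgS x n : zexpg x (n + 1)%R = zexpg x n * x.
Proof.
case: n => k.
  have -> : (Posz k + 1)%R = Posz k.+1 by lia.
  by rewrite /= expgSr.
case: k => [|k].
  have -> : (Negz 0 + 1)%R = Posz 0 by [].
  by rewrite /= expg1 mulVg.
have -> : (Negz k.+1 + 1)%R = Negz k by lia.
by rewrite /= (expgS x k.+1) invgM mulgVK.
Qed.

Lemma zexpgSV x n : zexpg x (n - 1)%R = zexpg x n * x^-1.
Proof.
have := zexpgS x (n - 1)%R; rewrite GRing.subrK => ->.
by rewrite mulgK.
Qed.

Lemma zexpg_dec x n : central (x ^+ 2) ->
  exists (bb : bool) c, central c /\ zexpg x n = x ^+ bb * c.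
Proof.
move=> hx.
have hP : forall k, exists (bb : bool) c, central c /\ x ^+ k = x ^+ bb * c.
  elim=> [|k [bb [c [hc e]]]].
    by exists false, 1; split; [exact: central1| rewrite expg0 mulg1].
  rewrite expgSr e.
  case: bb hc e => hc e.
    exists false, (x ^+ 2 * c); split; first exact: centralM.
    by rewrite !expgb /= mul1g -mulgA (hc x) mulgA expg2.
  exists true, c; split => //.
  by rewrite !expgb /= mul1g (hc x).
case: n => k /=; first exact: hP.
have [bb [c [hc ->]]] := hP k.+1.
case: bb.
  exists true, ((x ^+ 2)^-1 * c^-1); split; first by apply: centralM; apply: centralV.
  rewrite !expgb /= invgM expg2 invgM !mulgA mulgV mul1g.
  by rewrite (centralV hc (x^-1)).
exists false, c^-1; split; first exact: centralV.
by rewrite !expgb /= ?invgM ?mul1g ?invg1 ?mulg1.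
Qed.

End Basic.

Section Class3.
Variable H : groupType.
Hypothesis C : nilpotent_class_le3 H.
Implicit Types x y z c : H.

Lemma c3_central x y z : central [~ x, y, z].
Proof. by move=> w; apply/commgP; rewrite C. Qed.

Lemma comm_comm x1 x2 y1 y2 : [~ [~ x1, x2], [~ y1, y2]] = 1.
Proof.
apply/eqP/conjg_fixP; rewrite conjRg !(conjgR _ [~ y1, y2]) commgM_central //;
  by rewrite -invgR; apply: centralV; apply: c3_central.
Qed.

Lemma commute_comm x1 x2 y1 y2 : commute [~ x1, x2] [~ y1, y2].
Proof. by apply/commgP; rewrite comm_comm. Qed.

End Class3.

Lemma idx3P i : idx3 i -> [\/ i = 1%N, i = 2%N | i = 3%N].
Proof. rewrite /idx3 => h; have : (i = 1 \/ i = 2 \/ i = 3)%N by lia.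
by case=> [->|[->|->]]; [apply: Or31|apply: Or32|apply: Or33]. Qed.

Section Flip.
Variable H : groupType.
Lemma prod_flip (g : nat -> H) (bt : nat -> bool) s i :
  uniq s -> i \in s -> (forall j, commute (g j) (g i)) -> g i * g i = 1 ->
  \big[mul/1]_(j <- s) g j ^+ bt j * g i =
  \big[mul/1]_(j <- s) g j ^+ (if j == i then ~~ bt j else bt j).
Proof.
move=> us ins hc hg; elim: s us ins => //= j s IH /andP[jn us].
rewrite inE !big_cons; case: (eqVneq j i) => [eji | ne] /= hin.
  subst j.
  have -> : \big[mul/1]_(j <- s) g j ^+ (if j == i then ~~ bt j else bt j)
          = \big[mul/1]_(j <- s) g j ^+ bt j.
    rewrite big_seq_cond [RHS]big_seq_cond; apply: eq_bigr => j /andP[js _].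
    by case: eqP => // eji; subst j; rewrite js in jn.
  rewrite -mulgA.
  have -> : \big[mul/1]_(j <- s) g j ^+ bt j * g i = g i * \big[mul/1]_(j <- s) g j ^+ bt j.
    apply/esym/commute_prod => k _; apply: commuteX; apply/commute_sym; exact: hc.
  rewrite mulgA; congr (_ * _); case: (bt i); rewrite !expgb /= ?hg ?mul1g //.
by rewrite -mulgA IH.
Qed.
End Flip.

Section G3.
Variable H : groupType.
Variables a b : nat -> H.
Hypothesis R : G3_relations a b.
Hypothesis C : nilpotent_class_le3 H.

Lemma R1 i : idx3 i -> [~ a i, b i] = 1 /\ central (a i ^+ 2) /\ central (b i ^+ 2).
Proof. by case: R => h _; apply: h. Qed.
Lemma R2 i j : idx3 i -> idx3 j -> (i < j)%N ->
     u_ a i j = u_ a j i /\ v_ b i j = v_ b j i /\ u_ a i j ^+ 2 = 1 /\ v_ b i j ^+ 2 = 1.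
Proof. by case: R => _ [h _]; apply: h. Qed.
Lemma R3 i j : idx3 i -> idx3 j -> central (u_ a i j) /\ central (v_ b i j).
Proof. by case: R => _ [_ [h _]]; apply: h. Qed.
Lemma R4 i j : idx3 i -> idx3 j -> (i < j)%N -> p_ a b i j = p_ a b j i /\ p_ a b i j ^+ 2 = 1.
Proof. by case: R => _ [_ [_ [h _]]]; apply: h. Qed.
Lemma R5 i j k : idx3 i -> idx3 j -> idx3 k -> i != j -> j != k -> i != k ->
     z_ a b i j k = z_ a b j i k /\ z_ a b i j k = z_ a b k i j /\
     t_ a b i j k = t_ a b j i k /\ t_ a b i j k = t_ a b k i j /\
     z_ a b i j k ^+ 2 = 1 /\ t_ a b i j k ^+ 2 = 1 /\
     central (z_ a b i j k) /\ central (t_ a b i j k).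
Proof. by case: R => _ [_ [_ [_ h]]]; apply: h. Qed.

Lemma p_sym i j : idx3 i -> idx3 j -> p_ a b i j = p_ a b j i.
Proof.
move=> hi hj; case: (ltngtP i j) => h; first by case: (R4 hi hj h).
  by case: (R4 hj hi h).
by rewrite h.
Qed.

Lemma p_sq i j : idx3 i -> idx3 j -> i != j -> p_ a b i j * p_ a b i j = 1.
Proof.
move=> hi hj ne; case: (ltngtP i j) => h; first by case: (R4 hi hj h).
  by rewrite p_sym //; case: (R4 hj hi h).
by rewrite h eqxx in ne.
Qed.

Lemma p_inv i j : idx3 i -> idx3 j -> i != j -> (p_ a b i j)^-1 = p_ a b i j.
Proof. by move=> hi hj ne; apply: mulg1_eq; apply: p_sq. Qed.

Lemma bp i j : idx3 i -> idx3 j -> i != j -> [~ b i, a j] = p_ a b i j.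
Proof. by move=> hi hj ne; rewrite -invgR -/(p_ a b j i) p_inv 1?eq_sym // p_sym. Qed.

Lemma bp_eq i : idx3 i -> [~ b i, a i] = 1.
Proof. by move=> hi; rewrite -invgR; case: (R1 hi) => -> _; rewrite invg1. Qed.

Lemma pa_i i j : idx3 i -> idx3 j -> i != j -> [~ p_ a b i j, a i] = 1.
Proof.
move=> hi hj ne; have [_ [ha _]] := R1 hi.
have e : [~ b j, a i * a i] = 1 by apply: commg_central1r.
rewrite commgMr bp 1?eq_sym // p_sym // in e.
have e2 := mulg1_eq e; rewrite p_inv // in e2.
by rewrite commgEl -e2 mulVg.
Qed.

Lemma pb_j i j : idx3 i -> idx3 j -> i != j -> [~ p_ a b i j, b j] = 1.
Proof.
move=> hi hj ne; have [_ [_ hb]] := R1 hj.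
have e : [~ a i, b j * b j] = 1 by apply: commg_central1r.
rewrite commgMr -/(p_ a b i j) in e.
have e2 := mulg1_eq e; rewrite p_inv // in e2.
by rewrite commgEl -e2 mulVg.
Qed.


Lemma u_sym i j : idx3 i -> idx3 j -> u_ a i j = u_ a j i.
Proof.
move=> hi hj; case: (ltngtP i j) => h; first by case: (R2 hi hj h).
  by case: (R2 hj hi h).
by rewrite h.
Qed.

Lemma v_sym i j : idx3 i -> idx3 j -> v_ b i j = v_ b j i.
Proof.
move=> hi hj; case: (ltngtP i j) => h; first by case: (R2 hi hj h) => _ [].
  by case: (R2 hj hi h) => _ [].
by rewrite h.
Qed.

Lemma zA i j k : idx3 i -> idx3 j -> idx3 k -> i != j -> j != k -> i != k ->
  z_ a b i j k = z_ a b j i k.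
Proof. by move=> *; case: (@R5 i j k). Qed.
Lemma zB i j k : idx3 i -> idx3 j -> idx3 k -> i != j -> j != k -> i != k ->
  z_ a b i j k = z_ a b k i j.
Proof. by move=> *; case: (@R5 i j k) => // _ []. Qed.
Lemma tA i j k : idx3 i -> idx3 j -> idx3 k -> i != j -> j != k -> i != k ->
  t_ a b i j k = t_ a b j i k.
Proof. by move=> *; case: (@R5 i j k) => // _ [] _ []. Qed.
Lemma tB i j k : idx3 i -> idx3 j -> idx3 k -> i != j -> j != k -> i != k ->
  t_ a b i j k = t_ a b k i j.
Proof. by move=> *; case: (@R5 i j k) => // _ [] _ [] _ []. Qed.

Lemma z_perm i j k : idx3 i -> idx3 j -> idx3 k -> i != j -> j != k -> i != k ->
  z_ a b i j k = z_ a b 1 2 3.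
Proof.
move=> hi hj hk; case/idx3P: hi => ->; case/idx3P: hj => ->; case/idx3P: hk => -> //= _ _ _.
- by rewrite zB // zA.
- by rewrite zA.
- by rewrite zB.
- by rewrite zB // zB.
- by rewrite zA // zB.
Qed.


Lemma t_perm i j k : idx3 i -> idx3 j -> idx3 k -> i != j -> j != k -> i != k ->
  t_ a b i j k = t_ a b 1 2 3.
Proof.
move=> hi hj hk; case/idx3P: hi => ->; case/idx3P: hj => ->; case/idx3P: hk => -> //= _ _ _.
- by rewrite tB // tA.
- by rewrite tA.
- by rewrite tB.
- by rewrite tB // tB.
- by rewrite tA // tB.
Qed.


Definition X m : H := if (m <= 3)%N then a m else b (m - 3).
Definition gT i : H := match i with
  | 7%N => u_ a 1 2 | 8%N => u_ a 1 3 | 9%N => u_ a 2 3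
  | 10%N => v_ b 1 2 | 11%N => v_ b 1 3 | 12%N => v_ b 2 3
  | 13%N => p_ a b 1 2 | 14%N => p_ a b 1 3 | 15%N => p_ a b 2 3
  | 16%N => z_ a b 1 2 3 | 17%N => t_ a b 1 2 3 | _ => 1 end.
Definition tail (bt : nat -> bool) : H := \big[mul/1]_(i <- iota 7 11) gT i ^+ bt i.
Definition head (al : nat -> int) : H := \big[mul/1]_(m <- iota 1 6) zexpg (X m) (al m).
Definition inT x := exists bt, x = tail bt.

Lemma rangeP i : (7 <= i <= 17)%N -> (i = 7 \/ i = 8 \/ i = 9 \/ i = 10 \/ i = 11 \/ i = 12 \/
  i = 13 \/ i = 14 \/ i = 15 \/ i = 16 \/ i = 17)%N.
Proof. lia. Qed.

Ltac range_cases :=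
  let h := fresh "h" in
  move=> ? h; case: (rangeP h) => [->|[->|[->|[->|[->|[->|[->|[->|[->|[->|->]]]]]]]]]]; clear h.

Lemma gT_c j : exists x y, gT j = [~ x, y].
Proof.
do 18 (case: j => [|j]; first (by exists 1, 1; rewrite comm1g) || (by do 2 eexists; reflexivity)).
by exists 1, 1; rewrite comm1g.
Qed.

Lemma gT_comm j i : commute (gT j) (gT i).
Proof.
have [x [y ->]] := gT_c j; have [z [w ->]] := gT_c i; exact: commute_comm.
Qed.

Lemma gT_sq i : (7 <= i <= 17)%N -> gT i * gT i = 1.
Proof.
move: i; range_cases.
- by case: (@R2 1 2) => // _ [_ [h _]]; exact: h.
- by case: (@R2 1 3) => // _ [_ [h _]]; exact: h.
- by case: (@R2 2 3) => // _ [_ [h _]]; exact: h.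
- by case: (@R2 1 2) => // _ [_ [_ h]]; exact: h.
- by case: (@R2 1 3) => // _ [_ [_ h]]; exact: h.
- by case: (@R2 2 3) => // _ [_ [_ h]]; exact: h.
- by case: (@R4 1 2) => // _ h; exact: h.
- by case: (@R4 1 3) => // _ h; exact: h.
- by case: (@R4 2 3) => // _ h; exact: h.
- by case: (@R5 1 2 3) => // _ [_ [_ [_ [h _]]]]; exact: h.
- by case: (@R5 1 2 3) => // _ [_ [_ [_ [_ [h _]]]]]; exact: h.
Qed.

Lemma inT1 : inT 1.
Proof. exists (fun _ => false); by rewrite /tail !big_cons big_nil /= !expg0 !mulg1. Qed.

Lemma inT_flip x i : inT x -> (7 <= i <= 17)%N -> inT (x * gT i).
Proof.
move=> [bt ->] hi; exists (fun j => if j == i then ~~ bt j else bt j).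
apply: prod_flip; first by [].
- by rewrite mem_iota; lia.
- by move=> j; apply: gT_comm.
- exact: gT_sq.
Qed.

Lemma inT_g i : (7 <= i <= 17)%N -> inT (gT i).
Proof. by move=> hi; rewrite -[gT i]mul1g; apply: inT_flip => //; exact: inT1. Qed.

Lemma inT_gX i (bb : bool) : (7 <= i <= 17)%N -> inT (gT i ^+ bb).
Proof. by move=> hi; rewrite expgb; case: bb; [apply: inT_g | apply: inT1]. Qed.

Lemma inT_mul x y : inT x -> inT y -> inT (x * y).
Proof.
move=> hx [bt ->]; rewrite /tail.
have : forall j, j \in iota 7 11 -> (7 <= j <= 17)%N by move=> j; rewrite mem_iota; lia.
elim: (iota 7 11) x hx => [|j s IH] x hx hs; first by rewrite big_nil mulg1.
rewrite big_cons mulgA; apply: IH => [|k ks]; last by apply: hs; rewrite inE ks orbT.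
rewrite expgb; case: (bt j); last by rewrite mulg1.
by apply: inT_flip => //; apply: hs; rewrite inE eqxx.
Qed.

Lemma inT_prod (I : Type) (r : seq I) (F : I -> H) :
  (forall i, inT (F i)) -> inT (\big[mul/1]_(i <- r) F i).
Proof.
move=> hF; elim: r => [|i r IH]; first by rewrite big_nil; exact: inT1.
by rewrite big_cons; apply: inT_mul.
Qed.

Lemma inT_prod_seq (r : seq nat) (F : nat -> H) :
  (forall i, i \in r -> inT (F i)) -> inT (\big[mul/1]_(i <- r) F i).
Proof.
elim: r => [|i r IH] hF; first by rewrite big_nil; exact: inT1.
rewrite big_cons; apply: inT_mul; first by apply: hF; rewrite inE eqxx.
by apply: IH => j hj; apply: hF; rewrite inE hj orbT.
Qed.

Lemma inT_inv x : inT x -> inT x^-1.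
Proof.
move=> [bt ->].
have -> : (tail bt)^-1 = \big[mul/1]_(i <- rev (iota 7 11)) (gT i ^+ bt i)^-1.
  by rewrite prodgV revK.
apply: inT_prod_seq => i; rewrite mem_rev mem_iota => hi.
rewrite expgb; case: (bt i); last by rewrite invg1; exact: inT1.
rewrite (mulg1_eq (gT_sq _)); last by lia.
by apply: inT_g; lia.
Qed.

Lemma inT_conj_gen y c : (forall i, (7 <= i <= 17)%N -> inT (gT i ^ y)) -> inT c -> inT (c ^ y).
Proof.
move=> hy [bt ->]; rewrite /tail conjg_prod; apply: inT_prod_seq => i.
rewrite mem_iota => hi; rewrite conjXg expgb; case: (bt i); last exact: inT1.
by apply: hy; lia.
Qed.

Lemma inT_u_lt i j : idx3 i -> idx3 j -> (i < j)%N -> inT (u_ a i j).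
Proof.
move=> hi hj; case/idx3P: hi => ->; case/idx3P: hj => -> // _.
- by apply: (@inT_g 7).
- by apply: (@inT_g 8).
- by apply: (@inT_g 9).
Qed.

Lemma inT_v_lt i j : idx3 i -> idx3 j -> (i < j)%N -> inT (v_ b i j).
Proof.
move=> hi hj; case/idx3P: hi => ->; case/idx3P: hj => -> // _.
- by apply: (@inT_g 10).
- by apply: (@inT_g 11).
- by apply: (@inT_g 12).
Qed.

Lemma inT_p_lt i j : idx3 i -> idx3 j -> (i < j)%N -> inT (p_ a b i j).
Proof.
move=> hi hj; case/idx3P: hi => ->; case/idx3P: hj => -> // _.
- by apply: (@inT_g 13).
- by apply: (@inT_g 14).
- by apply: (@inT_g 15).
Qed.

Lemma inT_u i j : idx3 i -> idx3 j -> inT (u_ a i j).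
Proof.
move=> hi hj; case: (ltngtP i j) => h; first exact: inT_u_lt.
  by rewrite u_sym //; exact: inT_u_lt.
by rewrite h /u_ commgg; exact: inT1.
Qed.

Lemma inT_v i j : idx3 i -> idx3 j -> inT (v_ b i j).
Proof.
move=> hi hj; case: (ltngtP i j) => h; first exact: inT_v_lt.
  by rewrite v_sym //; exact: inT_v_lt.
by rewrite h /v_ commgg; exact: inT1.
Qed.

Lemma inT_p i j : idx3 i -> idx3 j -> inT (p_ a b i j).
Proof.
move=> hi hj; case: (ltngtP i j) => h; first exact: inT_p_lt.
  by rewrite p_sym //; exact: inT_p_lt.
by rewrite h /p_; case: (R1 hj) => -> _; exact: inT1.
Qed.

Lemma inT_bp i j : idx3 i -> idx3 j -> inT [~ b i, a j].
Proof.
move=> hi hj; case: (eqVneq i j) => [->|ne]; first by rewrite bp_eq //; exact: inT1.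
by rewrite bp //; exact: inT_p.
Qed.

Lemma inT_pa i j k : idx3 i -> idx3 j -> idx3 k -> i != j -> inT [~ p_ a b i j, a k].
Proof.
move=> hi hj hk ne.
case: (eqVneq k i) => [->|nki]; first by rewrite pa_i //; exact: inT1.
case: (eqVneq k j) => [->|nkj]; first by rewrite p_sym // pa_i 1?eq_sym //; exact: inT1.
rewrite -/(z_ a b i j k) z_perm // 1?eq_sym //; by apply: (@inT_g 16).
Qed.

Lemma inT_pb i j k : idx3 i -> idx3 j -> idx3 k -> i != j -> inT [~ p_ a b i j, b k].
Proof.
move=> hi hj hk ne.
case: (eqVneq k j) => [->|nkj]; first by rewrite pb_j //; exact: inT1.
case: (eqVneq k i) => [->|nki]; first by rewrite p_sym // pb_j 1?eq_sym //; exact: inT1.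
rewrite -/(t_ a b i j k) t_perm // 1?eq_sym //; by apply: (@inT_g 17).
Qed.

Lemma X_idx m : (1 <= m <= 6)%N ->
  ((m <= 3)%N /\ X m = a m /\ idx3 m) \/ (~~ (m <= 3)%N /\ X m = b (m - 3) /\ idx3 (m - 3)).
Proof.
move=> hm; rewrite /X /idx3; case: ifP => h; [left | right]; split => //; split => //; lia.
Qed.

Lemma X_sq m : (1 <= m <= 6)%N -> central (X m ^+ 2).
Proof.
by move=> /X_idx [[_ [-> h]]|[_ [-> h]]]; case: (R1 h) => _ [].
Qed.

Lemma inT_XX j k : (1 <= j <= 6)%N -> (1 <= k <= 6)%N -> inT [~ X j, X k].
Proof.
move=> /X_idx [[_ [-> hj]]|[_ [-> hj]]] /X_idx [[_ [-> hk]]|[_ [-> hk]]].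
- exact: inT_u.
- exact: inT_p.
- exact: inT_bp.
- exact: inT_v.
Qed.

Lemma gT_central i : (7 <= i <= 17)%N -> ~~ (13 <= i <= 15)%N -> central (gT i).
Proof.
move: i; range_cases => // _.
- by case: (@R3 1 2).
- by case: (@R3 1 3).
- by case: (@R3 2 3).
- by case: (@R3 1 2).
- by case: (@R3 1 3).
- by case: (@R3 2 3).
- by case: (@R5 1 2 3) => // _ [_ [_ [_ [_ [_ []]]]]].
- by case: (@R5 1 2 3) => // _ [_ [_ [_ [_ [_ []]]]]].
Qed.

Lemma inT_gX_comm i m : (7 <= i <= 17)%N -> (1 <= m <= 6)%N -> inT [~ gT i, X m].
Proof.
move=> hi hm; case: (boolP (13 <= i <= 15)%N) => h; last first.
  by rewrite commg_central1; [exact: inT1 | exact: gT_central].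
have : (i = 13 \/ i = 14 \/ i = 15)%N by lia.
case: (X_idx hm) => [[_ [-> hk]]|[_ [-> hk]]] [->|[->|->]] /=.
all: first [ apply: inT_pa | apply: inT_pb ] => //.
Qed.


Lemma inT_conjX c m : (1 <= m <= 6)%N -> inT c -> inT (c ^ X m).
Proof.
move=> hm; apply: inT_conj_gen => i hi; rewrite conjgR; apply: inT_mul.
  exact: inT_g.
exact: inT_gX_comm.
Qed.

Lemma inT_conjXV c m : (1 <= m <= 6)%N -> inT c -> inT (c ^ (X m)^-1).
Proof.
move=> hm hc.
have -> : (X m)^-1 = X m * (X m ^+ 2)^-1 by rewrite expg2 invgM mulgA mulgV mul1g.
rewrite conjgM conjg_central_r; last by apply: centralV; apply: X_sq.
exact: inT_conjX.
Qed.

Lemma inT_conjZ c m n : (1 <= m <= 6)%N -> inT c -> inT (c ^ zexpg (X m) n).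
Proof.
move=> hm hc; case: n => k /=.
  elim: k => [|k IH]; first by rewrite expg0 conjg1.
  by rewrite expgSr conjgM; apply: inT_conjX.
rewrite -expVgn; elim: k.+1 => [|k' IH]; first by rewrite expg0 conjg1.
by rewrite expgSr conjgM; apply: inT_conjXV.
Qed.

Definition Fz (al : nat -> int) m : H := zexpg (X m) (al m).

Lemma inT_conjP c s al : (forall m, m \in s -> (1 <= m <= 6)%N) -> inT c ->
  inT (c ^ \big[mul/1]_(m <- s) Fz al m).
Proof.
elim: s c => [|j s IH] c hs hc; first by rewrite big_nil conjg1.
rewrite big_cons conjgM; apply: IH.
  by move=> m ms; apply: hs; rewrite inE ms orbT.
by apply: inT_conjZ => //; apply: hs; rewrite inE eqxx.
Qed.

Section Move.
Variable y : H.
Hypothesis hy : forall j, (1 <= j <= 6)%N -> inT [~ X j, y].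

Lemma move1 j n : (1 <= j <= 6)%N ->
  exists tau, inT tau /\ zexpg (X j) n * y = y * zexpg (X j) n * tau.
Proof.
move=> hj; exists [~ zexpg (X j) n, y]; split; last exact: commgC.
have [bb [c [hc ->]]] := zexpg_dec n (X_sq hj).
rewrite -[y]mulg1 commgM_central //; last exact: central1.
rewrite expgb; case: bb; first exact: hy.
by rewrite comm1g; exact: inT1.
Qed.

Lemma moveP s al : (forall m, m \in s -> (1 <= m <= 6)%N) ->
  exists tau, inT tau /\ (\big[mul/1]_(m <- s) Fz al m) * y = y * (\big[mul/1]_(m <- s) Fz al m) * tau.
Proof.
elim: s => [|j s IH] hs.
  by exists 1; split; [exact: inT1 | rewrite !big_nil mul1g !mulg1].
have hs' : forall m, m \in s -> (1 <= m <= 6)%N.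
  by move=> m ms; apply: hs; rewrite inE ms orbT.
have hj : (1 <= j <= 6)%N by apply: hs; rewrite inE eqxx.
have [tau [htau e]] := IH hs'.
have [c [hc ec]] := move1 (al j) hj.
set P := \big[mul/1]_(m <- s) Fz al m.
exists (c ^ P * tau); split; first by apply: inT_mul => //; apply: inT_conjP.
have e' : P * y = y * P * tau := e.
rewrite !big_cons -/P -mulgA e' !mulgA /Fz.
by rewrite ec mulgK.
Qed.

Variables (k : nat) (d : int).
Hypothesis hm : forall n, zexpg (X k) n * y = zexpg (X k) (n + d)%R.

Definition upd (al : nat -> int) := fun m => if m == k then (al m + d)%R else al m.

Lemma collectA s al : uniq s -> k \in s -> (forall m, m \in s -> (1 <= m <= 6)%N) ->
  exists tau, inT tau /\ (\big[mul/1]_(m <- s) Fz al m) * y = (\big[mul/1]_(m <- s) Fz (upd al) m) * tau.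
Proof.
elim: s => [|j s IH] //= /andP[js us] hk hs.
have hs' : forall m, m \in s -> (1 <= m <= 6)%N.
  by move=> m ms; apply: hs; rewrite inE ms orbT.
rewrite !big_cons.
case: (eqVneq j k) => [ejk|njk].
  subst j.
  have [tau [htau e]] := moveP al hs'.
  exists tau; split => //.
  have -> : \big[mul/1]_(m <- s) Fz (upd al) m = \big[mul/1]_(m <- s) Fz al m.
    rewrite big_seq_cond [RHS]big_seq_cond; apply: eq_bigr => m /andP[ms _].
    rewrite /Fz /upd; case: eqP => // emk; subst m; by rewrite ms in js.
  by rewrite -mulgA e !mulgA {1}/Fz hm /Fz /upd eqxx.
rewrite inE eq_sym (negbTE njk) /= in hk.
have [tau [htau e]] := IH us hk hs'.
exists tau; split => //.
by rewrite -mulgA e mulgA {1}/Fz /Fz /upd (negbTE njk).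
Qed.

End Move.

Lemma nf_ht al be : G3_nf a b al be = head al * tail be.
Proof.
by rewrite /G3_nf /head /tail !big_cons !big_nil /= !mulg1 !mulgA.
Qed.


Lemma coll_gen y k d al be : (1 <= k <= 6)%N ->
  (forall j, (1 <= j <= 6)%N -> inT [~ X j, y]) ->
  (forall c, inT c -> inT (c ^ y)) ->
  (forall n, zexpg (X k) n * y = zexpg (X k) (n + d)%R) ->
  exists al' be', G3_nf a b al be * y = G3_nf a b al' be'.
Proof.
move=> hk hy hyc hm.
have hki : k \in iota 1 6 by rewrite mem_iota; lia.
have hr : forall m, m \in iota 1 6 -> (1 <= m <= 6)%N by move=> m; rewrite mem_iota; lia.
have [tau [htau e]] := @collectA y hy k d hm (iota 1 6) al (iota_uniq _ _) hki hr.
have [be' ebe] := inT_mul htau (hyc _ (ex_intro _ be erefl)).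
exists (upd k d al), be'.
have e' : head al * y = head (upd k d al) * tau := e.
by rewrite !nf_ht -mulgA (conjgC (tail be) y) mulgA e' -mulgA ebe.
Qed.

Lemma coll al be k (eps : bool) : (1 <= k <= 6)%N ->
  exists al' be', G3_nf a b al be * (if eps then X k else (X k)^-1) = G3_nf a b al' be'.
Proof.
move=> hk; case: eps.
  apply: (@coll_gen _ k 1%R) => //.
  - by move=> j hj; apply: inT_XX.
  - by move=> c hc; apply: inT_conjX.
  - by move=> n; rewrite zexpgS.
apply: (@coll_gen _ k (-1)%R) => //.
- by move=> j hj; rewrite commgVr; apply: inT_conjXV => //; apply: inT_inv; apply: inT_XX.
- by move=> c hc; apply: inT_conjXV.
- by move=> n; rewrite zexpgSV.
Qed.

End G3.

Section Morph.
Variables (H K : groupType) (f : H -> K).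
Hypothesis fM : forall x y, f (x * y) = f x * f y.

Lemma hom1 : f 1 = 1.
Proof. by apply: (mulgI (f 1)); rewrite -fM !mulg1. Qed.

Lemma homV x : f x^-1 = (f x)^-1.
Proof. by apply: (mulIg (f x)); rewrite -fM !mulVg hom1. Qed.

Lemma homX x n : f (x ^+ n) = f x ^+ n.
Proof. by elim: n => [|n IH]; rewrite ?hom1 // !expgS fM IH. Qed.

Lemma homZ x n : f (zexpg x n) = zexpg (f x) n.
Proof. by case: n => k /=; rewrite ?homV homX. Qed.

Lemma homC x y : f [~ x, y] = [~ f x, f y].
Proof. by rewrite /commg /conjg !fM !homV. Qed.

Lemma nf_morph (A B : nat -> H) al be :
  f (G3_nf A B al be) = G3_nf (fun i => f (A i)) (fun i => f (B i)) al be.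
Proof. by rewrite /G3_nf !fM !homX !homZ /u_ /v_ /p_ /z_ /t_ !homC. Qed.
End Morph.

Lemma nf_cong (H : groupType) (a b a' b' : nat -> H) al be :
  (forall i, idx3 i -> a' i = a i) -> (forall i, idx3 i -> b' i = b i) ->
  G3_nf a' b' al be = G3_nf a b al be.
Proof. by move=> ha hb; rewrite /G3_nf /z_ /t_ /u_ /v_ /p_ !ha // !hb. Qed.

Lemma sig_cong (H : groupType) (a b : nat -> H) al be al' be' :
  (forall i, (1 <= i <= 6)%N -> al i = al' i) ->
  (forall i, (7 <= i <= 17)%N -> be i = be' i) ->
  G3_sigma_nf a b al be = G3_sigma_nf a b al' be'.
Proof. by move=> ha hb; rewrite /G3_sigma_nf !ha // !hb. Qed.

Lemma pairE (G1 G2 : groupType) (x y : G1 * G2) : x.1 = y.1 -> x.2 = y.2 -> x = y.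
Proof. by case: x; case: y => ? ? ? ? /= -> ->. Qed.

Lemma central_pair (G1 G2 : groupType) (x : G1 * G2) : central x.1 -> central x.2 -> central x.
Proof. by move=> h1 h2 y; apply: pairE; [apply: h1 | apply: h2]. Qed.

Section Pair.
Variables G1 G2 : groupType.
Lemma fstX (x : G1 * G2) n : (x ^+ n).1 = x.1 ^+ n.
Proof. exact: (@homX _ _ fst (fun _ _ => erefl)). Qed.
Lemma sndX (x : G1 * G2) n : (x ^+ n).2 = x.2 ^+ n.
Proof. exact: (@homX _ _ snd (fun _ _ => erefl)). Qed.
Lemma fstC (x y : G1 * G2) : ([~ x, y]).1 = [~ x.1, y.1].
Proof. by []. Qed.
Lemma sndC (x y : G1 * G2) : ([~ x, y]).2 = [~ x.2, y.2].
Proof. by []. Qed.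

Lemma pair_rel (a1 b1 : nat -> G1) (a2 b2 : nat -> G2) :
  G3_relations a1 b1 -> G3_relations a2 b2 ->
  G3_relations (fun i => (a1 i, a2 i) : G1 * G2) (fun i => (b1 i, b2 i)).
Proof.
move=> [r1 [r2 [r3 [r4 r5]]]] [s1 [s2 [s3 [s4 s5]]]].
split; [|split; [|split; [|split]]].
- move=> i hi; have [e1 [c1 d1]] := r1 i hi; have [e2 [c2 d2]] := s1 i hi.
  split; [|split].
  + by apply: pairE; rewrite ?fstC ?sndC /= ?e1 ?e2.
  + by apply: central_pair; rewrite ?fstX ?sndX.
  + by apply: central_pair; rewrite ?fstX ?sndX.
- move=> i j hi hj hij.
  have [e1 [f1 [g1 h1]]] := r2 i j hi hj hij; have [e2 [f2 [g2 h2]]] := s2 i j hi hj hij.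
  split; [|split; [|split]].
  + by apply: pairE; rewrite /u_ ?fstC ?sndC /=; [exact: e1 | exact: e2].
  + by apply: pairE; rewrite /v_ ?fstC ?sndC /=; [exact: f1 | exact: f2].
  + by apply: pairE; rewrite ?fstX ?sndX /u_ ?fstC ?sndC /=; [exact: g1 | exact: g2].
  + by apply: pairE; rewrite ?fstX ?sndX /v_ ?fstC ?sndC /=; [exact: h1 | exact: h2].
- move=> i j hi hj; have [e1 f1] := r3 i j hi hj; have [e2 f2] := s3 i j hi hj.
  by split; apply: central_pair.
- move=> i j hi hj hij; have [e1 f1] := r4 i j hi hj hij; have [e2 f2] := s4 i j hi hj hij.
  split.
  + by apply: pairE; rewrite /p_ ?fstC ?sndC /=; [exact: e1 | exact: e2].
  + by apply: pairE; rewrite ?fstX ?sndX /p_ ?fstC ?sndC /=; [exact: f1 | exact: f2].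
- move=> i j k hi hj hk nij njk nik.
  have [e1 [f1 [g1 [h1 [k1 [l1 [m1 n1]]]]]]] := r5 i j k hi hj hk nij njk nik.
  have [e2 [f2 [g2 [h2 [k2 [l2 [m2 n2]]]]]]] := s5 i j k hi hj hk nij njk nik.
  split; [|split; [|split; [|split; [|split; [|split; [|split]]]]]].
  + by apply: pairE; [exact: e1 | exact: e2].
  + by apply: pairE; [exact: f1 | exact: f2].
  + by apply: pairE; [exact: g1 | exact: g2].
  + by apply: pairE; [exact: h1 | exact: h2].
  + by apply: pairE; rewrite ?fstX ?sndX; [exact: k1 | exact: k2].
  + by apply: pairE; rewrite ?fstX ?sndX; [exact: l1 | exact: l2].
  + by apply: central_pair; [exact: m1 | exact: m2].
  + by apply: central_pair; [exact: n1 | exact: n2].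
Qed.

Lemma pair_c3 : nilpotent_class_le3 G1 -> nilpotent_class_le3 G2 ->
  nilpotent_class_le3 (G1 * G2)%type.
Proof. by move=> c1 c2 x y z w; apply: pairE; rewrite ?fstC ?sndC ?c1 ?c2. Qed.
End Pair.

Section Sym.
Variable H : groupType.
Variables a b : nat -> H.
Hypothesis R : G3_relations a b.

Lemma pba i j : idx3 i -> idx3 j -> i != j -> p_ b a i j = p_ a b i j.
Proof. exact: bp. Qed.

Lemma zba i j k : idx3 i -> idx3 j -> i != j -> z_ b a i j k = t_ a b i j k.
Proof. by move=> *; rewrite /z_ /t_ pba. Qed.

Lemma tba i j k : idx3 i -> idx3 j -> i != j -> t_ b a i j k = z_ a b i j k.
Proof. by move=> *; rewrite /z_ /t_ pba. Qed.

Lemma rel_sym : G3_relations b a.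
Proof.
split; [|split; [|split; [|split]]].
- move=> i hi; have [e1 [c1 d1]] := R1 R hi; split; [|split] => //.
  exact: bp_eq.
- move=> i j hi hj hij; have [e1 [f1 [g1 h1]]] := R2 R hi hj hij; by [].
- move=> i j hi hj; have [e1 f1] := R3 R hi hj; by [].
- move=> i j hi hj hij.
  have nij : i != j by rewrite neq_ltn hij.
  have nji : j != i by rewrite eq_sym.
  rewrite (pba hi hj nij) (pba hj hi nji) (p_sym R hj hi).
  by case: (R4 R hi hj hij).
- move=> i j k hi hj hk nij njk nik.
  have [e1 [f1 [g1 [h1 [k1 [l1 [m1 n1]]]]]]] := R5 R hi hj hk nij njk nik.
  have nji : j != i by rewrite eq_sym.
  have nkj : k != j by rewrite eq_sym.
  have nki : k != i by rewrite eq_sym.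
  rewrite !zba ?tba //; by do 7 (split => //).
Qed.

Lemma sig_nf al be : G3_nf b a al be = G3_sigma_nf a b al be.
Proof. by rewrite /G3_nf /G3_sigma_nf !zba // !tba // !pba. Qed.

End Sym.

Definition ev (k : nat) : nat -> int := fun m => if m == k then 1%R else 0%R.

Lemma nf_ev (H : groupType) (a b : nat -> H) k : (1 <= k <= 6)%N ->
  G3_nf a b (ev k) (fun _ => false) = X a b k /\
  G3_sigma_nf a b (ev k) (fun _ => false) = X b a k.
Proof.
move=> hk; have : (k = 1 \/ k = 2 \/ k = 3 \/ k = 4 \/ k = 5 \/ k = 6)%N by lia.
case=> [->|[->|[->|[->|[->|->]]]]]; rewrite /G3_nf /G3_sigma_nf /ev /X /=;
  by rewrite !expg0 ?expg1 !mulg1 ?mul1g.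
Qed.

Unset Implicit Arguments.
Set Strict Implicit.

Theorem proposition2p9 (G : groupType) (a b : nat -> G) :
  G3_relations a b ->
  nilpotent_class_le3 G ->
  G3_unique_nf a b ->
  (exists sigma : G -> G,
     forall al be, sigma (G3_nf a b al be) = G3_sigma_nf a b al be) /\
  (forall sigma : G -> G,
     (forall al be, sigma (G3_nf a b al be) = G3_sigma_nf a b al be) ->
     (forall x y : G, sigma (x * y) = sigma x * sigma y) /\
     bijective sigma /\
     (forall x : G, sigma (sigma x) = x) /\
     (exists x : G, sigma x <> x)).
Proof.
move=> R C U.
have RS := rel_sym R.
pose A := fun i => (a i, b i) : G * G.
pose B := fun i => (b i, a i) : G * G.
have RH : G3_relations A B := pair_rel R RS.
have CH : nilpotent_class_le3 (G * G)%type := pair_c3 C C.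
pose inS (w : G * G) := exists al be, w = G3_nf A B al be.
pose P (y : G * G) := forall w, inS w -> inS (w * y).
pose Q y := P y /\ P y^-1.
have QM : forall y z, Q y -> Q z -> Q (y * z).
  move=> y z [py py'] [pz pz']; split => w hw.
    by rewrite mulgA; apply: pz; apply: py.
  by rewrite invgM mulgA; apply: py'; apply: pz'.
have QV : forall y, Q y -> Q y^-1 by move=> y [p1 p2]; split; rewrite ?invgK.
have Q1 : Q 1 by split => w hw; rewrite ?invg1 mulg1.
have QX : forall y n, Q y -> Q (y ^+ n).
  by move=> y n hy; elim: n => [|n IH]; rewrite ?expg0 // expgS; apply: (QM).
have QZ : forall y n, Q y -> Q (zexpg y n).
  by move=> y [] n hy /=; [apply: (QX) | apply: (QV); apply: (QX)].
have QC : forall y z, Q y -> Q z -> Q [~ y, z].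
  by move=> y z hy hz; rewrite /commg /conjg; apply: (QM); [apply: (QV)|apply: (QM); [apply: (QV)|apply: (QM)]].
have QG : forall k, (1 <= k <= 6)%N -> Q (X A B k).
  move=> k hk; split => w [al [be ->]].
    by have [al' [be' e]] := coll RH CH al be true hk; exists al', be'.
  by have [al' [be' e]] := coll RH CH al be false hk; exists al', be'.
have QA : forall i, idx3 i -> Q (A i).
  move=> i; rewrite /idx3 => hi.
  have hi6 : (1 <= i <= 6)%N by lia.
  have := QG i hi6; rewrite /X ifT //; lia.
have QB : forall i, idx3 i -> Q (B i).
  move=> i; rewrite /idx3 => hi.
  have hi6 : (1 <= i + 3 <= 6)%N by lia.
  have := QG _ hi6; rewrite /X ifF ?addnK //; lia.
have Qnf : forall al be, Q (G3_nf A B al be).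
  move=> al be; rewrite /G3_nf /z_ /t_ /u_ /v_ /p_.
  repeat apply: (QM); (apply: (QZ) || apply: (QX)); repeat apply: (QC);
    (apply: (QA) || apply: (QB)); done.
have Smul : forall w1 w2, inS w1 -> inS w2 -> inS (w1 * w2).
  by move=> w1 w2 h1 [al [be ->]]; apply: (Qnf al be).1.
have fst_nf : forall al be, (G3_nf A B al be).1 = G3_nf a b al be.
  by move=> al be; exact: (@nf_morph _ _ fst (fun _ _ => erefl) A B al be).
have snd_nf : forall al be, (G3_nf A B al be).2 = G3_sigma_nf a b al be.
  move=> al be; rewrite -sig_nf //.
  exact: (@nf_morph _ _ snd (fun _ _ => erefl) A B al be).
split.
  have hU : forall g, {p : (nat -> int) * (nat -> bool) | G3_nf a b p.1 p.2 = g}.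
    move=> g; apply: constructive_indefinite_description.
    by have [al [be e]] := U.1 g; exists (al, be).
  exists (fun g => G3_sigma_nf a b (sval (hU g)).1 (sval (hU g)).2).
  move=> al be; case: (hU _) => [[al' be'] /= e].
  have [h1 h2] := U.2 _ _ _ _ e; exact: sig_cong.
move=> sigma hs.
have key : forall x, inS (x, sigma x).
  move=> x; have [al [be e]] := U.1 x; exists al, be.
  by apply: pairE; [rewrite fst_nf e | rewrite snd_nf -e hs].
have key2 : forall x y, inS (x, y) -> y = sigma x.
  move=> x y [al [be e]].
  have e1 : x = (G3_nf A B al be).1 by rewrite -e.
  have e2 : y = (G3_nf A B al be).2 by rewrite -e.
  rewrite fst_nf in e1; rewrite snd_nf in e2.
  by rewrite e1 hs e2.
have hom : forall x y, sigma (x * y) = sigma x * sigma y.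
  by move=> x y; symmetry; apply: key2; exact: (Smul _ _ (key x) (key y)).
have sab : forall i, idx3 i -> sigma (a i) = b i /\ sigma (b i) = a i.
  move=> i hi.
  have hi1 : (1 <= i <= 6)%N by move: hi; rewrite /idx3; lia.
  have hi2 : (1 <= i + 3 <= 6)%N by move: hi; rewrite /idx3; lia.
  have [e1 e2] := nf_ev a b hi1; have [e3 e4] := nf_ev a b hi2.
  move: e1 e2 e3 e4; rewrite /X; move: hi; rewrite /idx3 => hi.
  have -> : (i <= 3)%N by lia.
  have -> : (i + 3 <= 3)%N = false by apply/negbTE; rewrite -ltnNge; lia.
  rewrite addnK => e1 e2 e3 e4.
  by rewrite -{1}e1 -{2}e3 !hs e2 e4.
have sinv : forall x, sigma (sigma x) = x.
  move=> x; have [al [be <-]] := U.1 x.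
  have hm : forall x y, (sigma \o sigma) (x * y) = (sigma \o sigma) x * (sigma \o sigma) y.
    by move=> x' y' /=; rewrite !hom.
  rewrite -[sigma (sigma _)]/((sigma \o sigma) _) (nf_morph hm).
  by apply: nf_cong => i hi /=; case: (sab i hi) => h1 h2; rewrite ?h1 ?h2 ?h1.
split => //; split; first by exists sigma.
split => //.
exists (a 1%N) => h.
have [h1 _] := sab 1%N erefl; rewrite h1 in h.
have [e1 _] := nf_ev a b (k := 1%N) erefl.
have [e4 _] := nf_ev a b (k := 4%N) erefl.
rewrite /X /= in e1 e4.
have := U.2 _ _ _ _ (etrans e1 (etrans (esym h) (esym e4))).
by case=> /(_ 1%N erefl).
Qed.
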